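(* Let $a<b$ and let $X$ be a random variable taking values in $[a,b]$, with probability density function $f:[a,b]\rightarrow[0,1]$ and cumulative distribution function $F(x)=\Pr(X\le x)=\int_a^x f(t)\,dt$. Assume that $F$ is differentiable in $(a,b)$ with $F'=f\in L^1[a,b]$ and that $\gamma\le f(t)\le\Gamma$ for all $t\in[a,b]$, where $\gamma,\Gamma$ are real constants. Then \[ \left|\frac{1}{2}\left[F\left(\frac{3a+b}{4}\right)+F\left(\frac{a+3b}{4}\right)\right]-\frac{b-E(X)}{b-a}\right|\leq \frac{b-a}{4} \left(\frac{1}{b-a}-\gamma\right) \] and \[ \left|\frac{1}{2}\left[F\left(\frac{3a+b}{4}\right)+F\left(\frac{a+3b}{4}\right)\right]-\frac{b-E(X)}{b-a}\right|\leq \frac{b-a}{4} \left(\Gamma-\frac{1}{b-a}\right), \] where $E(X)$ is the expectation of $X$. *)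

(* Defs.v *)
From HB Require Import structures.
From mathcomp Require Import all_boot all_order all_algebra.
From mathcomp Require Import all_classical all_reals all_analysis.
Set Implicit Arguments. Unset Strict Implicit. Unset Printing Implicit Defensive.
Import Order.TTheory GRing.Theory Num.Theory.
Local Open Scope ring_scope.

Definition cdfR d (T : measurableType d) (R : realType) (P : probability T R)
  (X : {RV P >-> R}) (x : R) : R := fine (cdf X x).

(* Main.v *)
Require Import Defs.
From HB Require Import structures.
From mathcomp Require Import all_boot all_order all_algebra.
From mathcomp Require Import all_classical all_reals all_analysis measurable_realfun.
From mathcomp Require Import ring lra.
Import Order.TTheory GRing.Theory Num.Theory.
Import numFieldNormedType.Exports.
Local Open Scope classical_set_scope.
Local Open Scope ring_scope.

Section S.
Context {R : realType}.
Notation mu := (@lebesgue_measure R).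

Lemma int_lin (u v c0 c1 : R) : u < v ->
  (\int[mu]_(r in `[u,v]) (c0 + c1*(r-u))%:E =
   (c0*(v-u) + c1*(v-u)^+2/2)%:E)%E.
Proof.
move=> uv.
pose p : {poly R} := c0 *: 'X + (c1/2) *: 'X^2 - (c1*u) *: 'X.
have hp r : (p^`()).[r] = c0 + c1*(r-u).
  rewrite /p !poly.derivE !hornerE /=; by field.
under eq_integral => r _ do rewrite -hp.
rewrite (@continuous_FTC2 _ (fun x : R => (p^`()).[x]) (fun x : R => p.[x])) //.
- rewrite -EFinB; congr (_%:E); rewrite /p !hornerE /=; by field.
- by apply: continuous_in_subspaceT => x _; exact: continuous_horner.
- split.
  + by move=> x _; exact: derivable_horner.
  + exact/cvg_at_right_filter/continuous_horner.
  + exact/cvg_at_left_filter/continuous_horner.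
- by move=> x _; rewrite -derivE.
Qed.

Lemma mu_itv_fin (u v : R) : (mu `[u,v] < +oo)%E.
Proof. by rewrite lebesgue_measure_itv /=; case: ifP => _; rewrite ?ltry // -EFinB ltry. Qed.

Lemma intg_h (h : R -> R) (u v : R) : measurable_fun `[u,v] h ->
  (forall r, u <= r <= v -> 0 <= h r <= 1) ->
  mu.-integrable `[u,v] (EFin \o h).
Proof.
move=> mh h01; apply: measurable_bounded_integrable => //.
- exact: mu_itv_fin.
- exists 1; split=> // M M1 x /= Ax.
  have /andP[h0 h1] : 0 <= h x <= 1 by apply: h01; move: Ax; rewrite in_itv.
  by rewrite ger0_norm // (le_trans h1) // ltW.
Qed.

Lemma intg_lin (u v c0 c1 : R) :
  mu.-integrable `[u,v] (EFin \o (fun r => c0 + c1*(r-u))).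
Proof.
have -> : (fun r => c0 + c1*(r-u)) = (fun r : R => ((c0 - c1*u)%:P + c1 *: 'X : {poly R}).[r]).
  by apply/funext => r; rewrite !hornerE; ring.
apply: continuous_compact_integrable; first exact: segment_compact.
by apply: continuous_in_subspaceT => x _; exact: continuous_horner.
Qed.

Lemma piece_le (h : R -> R) (u v c0 c1 : R) : u < v ->
  measurable_fun `[u,v] h ->
  (forall r, u <= r <= v -> 0 <= h r <= 1) ->
  (forall r, u <= r <= v -> c0 + c1*(r-u) <= h r) ->
  ((c0*(v-u) + c1*(v-u)^+2/2)%:E <= \int[mu]_(r in `[u,v]) (h r)%:E)%E.
Proof.
move=> uv mh h01 hl; rewrite -int_lin //.
have i1 := intg_lin u v c0 c1; have i2 := intg_h _ _ _ mh h01.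
apply: (le_integral _ i1 i2) => //.
by move=> r; rewrite inE /= in_itv /= => /hl; rewrite lee_fin.
Qed.

Lemma piece_ge (h : R -> R) (u v c0 c1 : R) : u < v ->
  measurable_fun `[u,v] h ->
  (forall r, u <= r <= v -> 0 <= h r <= 1) ->
  (forall r, u <= r <= v -> h r <= c0 + c1*(r-u)) ->
  (\int[mu]_(r in `[u,v]) (h r)%:E <= (c0*(v-u) + c1*(v-u)^+2/2)%:E)%E.
Proof.
move=> uv mh h01 hl; rewrite -int_lin //.
have i1 := intg_lin u v c0 c1; have i2 := intg_h _ _ _ mh h01.
apply: (le_integral _ i2 i1) => //.
by move=> r; rewrite inE /= in_itv /= => /hl; rewrite lee_fin.
Qed.

Lemma itv_split (u x y : R) : u <= x -> x <= y ->
  (`[u, y] = `[u, x] `|` `]x, y])%classic.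
Proof. by move=> ux xy; rewrite (@itv_bndbnd_setU _ _ _ (BRight x)) // bnd_simp. Qed.

Lemma itv_disj (u x y : R) : [disjoint `[u, x]%classic & `]x, y]%classic].
Proof.
rewrite disj_set2E; apply/eqP/seteqP; split => // z /= [].
by rewrite !in_itv /= => /andP[_ h1] /andP[h2 _]; lra.
Qed.

Lemma mu_oc (x y : R) : x <= y -> mu `]x, y]%classic = (y - x)%:E.
Proof.
move=> xy; rewrite lebesgue_measure_itv /= lte_fin.
case: ifP => h; first by rewrite EFinB.
move/negbT: h; rewrite -leNgt => yx.
have -> : y = x by apply/le_anti; rewrite yx xy.
by rewrite subrr.
Qed.

Lemma int_cst_oc (x y c : R) : x <= y ->
  (\int[mu]_(t in `]x, y]) (cst c%:E) t = (c * (y - x))%:E)%E.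
Proof.
move=> xy; rewrite integral_cst // EFinM; congr (_ * _)%E; exact: (mu_oc x y xy).
Qed.

Lemma int_bounds (f : R -> R) (a b gam Gam x y : R) :
  a <= x -> x <= y -> y <= b ->
  mu.-integrable `[a, b] (EFin \o f) ->
  (forall t, a <= t <= b -> 0 <= f t) ->
  (forall t, a <= t <= b -> gam <= f t <= Gam) ->
  (\int[mu]_(t in `[a, y]) (f t)%:E =
     \int[mu]_(t in `[a, x]) (f t)%:E + \int[mu]_(t in `]x, y]) (f t)%:E)%E /\
  ((gam * (y - x))%:E <= \int[mu]_(t in `]x, y]) (f t)%:E)%E /\
  (\int[mu]_(t in `]x, y]) (f t)%:E <= (Gam * (y - x))%:E)%E.
Proof.
move=> ax xy yb intf f0 fb.
have /integrableP[mf _] := intf.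
have sub1 : (`]x, y] `<=` `[a, b])%classic.
  by move=> t /=; rewrite !in_itv /= => /andP[h1 h2]; apply/andP; split; lra.
have sub2 : (`[a, y] `<=` `[a, b])%classic.
  by move=> t /=; rewrite !in_itv /= => /andP[h1 h2]; apply/andP; split; lra.
have inab t : `]x, y]%classic t -> a <= t <= b.
  by move=> /sub1 /=; rewrite in_itv.
split; [|split].
- rewrite (itv_split _ _ _ ax xy) ge0_integral_setU //.
  + by rewrite -itv_split //; apply: measurable_funS mf.
  + move=> t; rewrite -itv_split // => /sub2 /=; rewrite in_itv /= => h.
    by rewrite lee_fin f0.
  + exact: itv_disj.
- have [g0|g0] := leP gam 0.
    apply: (@le_trans _ _ 0%E); first by rewrite lee_fin mulr_le0_ge0 // subr_ge0.
    by apply: integral_ge0 => t /inab h; rewrite lee_fin f0.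
  have -> : (gam * (y - x))%:E = (\int[mu]_(t in `]x, y]) (cst gam%:E) t)%E.
    by rewrite int_cst_oc.
  apply: ge0_le_integral => //.
  + by move=> t _; rewrite lee_fin ltW.
  + by apply: measurable_funS mf.
  + move=> t /inab h; rewrite lee_fin; by have /andP[] := fb t h.
- have -> : (Gam * (y - x))%:E = (\int[mu]_(t in `]x, y]) (cst Gam%:E) t)%E.
    by rewrite int_cst_oc.
  apply: ge0_le_integral => //.
  + by move=> t /inab h; rewrite lee_fin f0.
  + by apply: measurable_funS mf.
  + move=> t /inab h; rewrite lee_fin; by have /andP[] := fb t h.
Qed.

Lemma int_split (g : R -> R) (u x v : R) : u <= x -> x <= v ->
  measurable_fun setT g -> (forall r, 0 <= g r) ->
  (\int[mu]_(r in `[u, v]) (g r)%:E =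
   \int[mu]_(r in `[u, x]) (g r)%:E + \int[mu]_(r in `[x, v]) (g r)%:E)%E.
Proof.
move=> ux xv mg g0.
have mE : measurable_fun setT (EFin \o g) by exact/measurable_EFinP.
rewrite (itv_split _ _ _ ux xv) ge0_integral_setU //.
- by rewrite integral_itv_obnd_cbnd //; exact: measurable_funS mE.
- exact: measurable_funS mE.
- by move=> r _; rewrite lee_fin.
- exact: itv_disj.
Qed.

Lemma piece_all (h : R -> R) (u w gam Gam : R) : 0 < w ->
  measurable_fun setT h -> (forall r, 0 <= h r <= 1) ->
  (forall x y, u <= x -> x <= y -> y <= u + w ->
     gam * (y - x) <= h x - h y <= Gam * (y - x)) ->
  exists I : R,
    (\int[mu]_(r in `[u, (u + w)%R]) (h r)%:E = I%:E)%E /\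
    h u * w - Gam * w ^+ 2 / 2 <= I /\ I <= h u * w - gam * w ^+ 2 / 2 /\
    (h (u + w) + gam * w) * w - gam * w ^+ 2 / 2 <= I /\
    I <= (h (u + w) + Gam * w) * w - Gam * w ^+ 2 / 2.
Proof.
move=> w0 mh h01 hb.
have uv : u < u + w by rewrite ltrDl.
have mh' : measurable_fun `[u, (u + w)%R] h by exact: measurable_funS mh.
have h01' r : u <= r <= u + w -> 0 <= h r <= 1 by move=> _; exact: h01.
have e : u + w - u = w by ring.
have L1 := @piece_le h u (u + w) (h u) (- Gam) uv mh' h01'.
have U1 := @piece_ge h u (u + w) (h u) (- gam) uv mh' h01'.
have L2 := @piece_le h u (u + w) (h (u + w) + gam * w) (- gam) uv mh' h01'.
have U2 := @piece_ge h u (u + w) (h (u + w) + Gam * w) (- Gam) uv mh' h01'.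
rewrite e in L1 U1 L2 U2.
have {L1}L1 : ((h u * w + - Gam * w ^+ 2 / 2)%:E <=
   \int[mu]_(r in `[u, (u + w)%R]) (h r)%:E)%E.
  apply: L1 => r /andP[ur rv]; have := hb u r (lexx u) ur rv; lra.
have {U1}U1 : (\int[mu]_(r in `[u, (u + w)%R]) (h r)%:E <=
   (h u * w + - gam * w ^+ 2 / 2)%:E)%E.
  apply: U1 => r /andP[ur rv]; have := hb u r (lexx u) ur rv; lra.
have {L2}L2 : (((h (u + w) + gam * w) * w + - gam * w ^+ 2 / 2)%:E <=
   \int[mu]_(r in `[u, (u + w)%R]) (h r)%:E)%E.
  apply: L2 => r /andP[ur rv]; have := hb r (u + w) ur rv (lexx _).
  have : gam * (u + w - r) = gam * w - gam * (r - u) by ring.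
  lra.
have {U2}U2 : (\int[mu]_(r in `[u, (u + w)%R]) (h r)%:E <=
   ((h (u + w) + Gam * w) * w + - Gam * w ^+ 2 / 2)%:E)%E.
  apply: U2 => r /andP[ur rv]; have := hb r (u + w) ur rv (lexx _).
  have : Gam * (u + w - r) = Gam * w - Gam * (r - u) by ring.
  lra.
set J := (\int[mu]_(r in `[u, (u + w)%R]) (h r)%:E)%E in L1 U1 L2 U2 *.
have Jfin : J \is a fin_num.
  by rewrite fin_numE; apply/andP; split; apply/eqP => Je;
    [move: L1; rewrite Je | move: U1; rewrite Je].
exists (fine J); split; first by rewrite fineK.
rewrite -(fineK Jfin) !lee_fin in L1 U1 L2 U2.
move: L1 U1 L2 U2; rewrite !mulNr => L1 U1 L2 U2.
by split=> //; split=> //; split.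
Qed.

Definition PB (Hu Hv I w gam Gam : R) :=
  [/\ Hu * w - Gam * w ^+ 2 / 2 <= I, I <= Hu * w - gam * w ^+ 2 / 2,
      (Hv + gam * w) * w - gam * w ^+ 2 / 2 <= I,
      I <= (Hv + Gam * w) * w - Gam * w ^+ 2 / 2 &
      gam * w <= Hu - Hv <= Gam * w].

Lemma PB_div (Hu Hv I w gam Gam : R) : 0 < w -> PB Hu Hv I w gam Gam ->
  [/\ Hu - Gam * w / 2 <= I / w, I / w <= Hu - gam * w / 2,
      Hv + gam * w / 2 <= I / w, I / w <= Hv + Gam * w / 2 &
      gam * w <= Hu - Hv <= Gam * w].
Proof.
move=> w0 [h1 h2 h3 h4 h5]; split => //.
- by rewrite ler_pdivlMr //; have -> : (Hu - Gam * w / 2) * w = Hu * w - Gam * w ^+ 2 / 2 by ring.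
- by rewrite ler_pdivrMr //; have -> : (Hu - gam * w / 2) * w = Hu * w - gam * w ^+ 2 / 2 by ring.
- by rewrite ler_pdivlMr //; have -> : (Hv + gam * w / 2) * w = (Hv + gam * w) * w - gam * w ^+ 2 / 2 by field.
- by rewrite ler_pdivrMr //; have -> : (Hv + Gam * w / 2) * w = (Hv + Gam * w) * w - Gam * w ^+ 2 / 2 by field.
Qed.

Lemma final (a b gam Gam E F1 Fm F2 H0 H1 H2 H3 H4 I1 I2 I3 I4 w : R) :
  0 < w -> b - a = 4 * w -> E - a = I1 + I2 + I3 + I4 ->
  H0 = 1 -> H4 = 0 -> H1 = 1 - F1 -> H2 = 1 - Fm -> H3 = 1 - F2 ->
  PB H0 H1 I1 w gam Gam -> PB H1 H2 I2 w gam Gam ->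
  PB H2 H3 I3 w gam Gam -> PB H3 H4 I4 w gam Gam ->
  `| (F1 + F2) / 2 - (b - E) / (b - a) | <= (b - a) / 4 * (1 / (b - a) - gam)
  /\
  `| (F1 + F2) / 2 - (b - E) / (b - a) | <= (b - a) / 4 * (Gam - 1 / (b - a)).
Proof.
move=> w0 hba hE e0 e4 e1 e2 e3 P1 P2 P3 P4.
have wn0 : w != 0 by rewrite gt_eqF.
have -> : (b - E) / (b - a) = 1 - (I1 / w + I2 / w + I3 / w + I4 / w) / 4.
  have -> : b - E = 4 * w - (I1 + I2 + I3 + I4) by lra.
  rewrite hba; field; exact: wn0.
have -> : (b - a) / 4 * (1 / (b - a) - gam) = 1 / 4 - gam * w.
  rewrite hba; field; exact: wn0.
have -> : (b - a) / 4 * (Gam - 1 / (b - a)) = Gam * w - 1 / 4.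
  rewrite hba; field; exact: wn0.
have [a1 a2 a3 a4 a5] := PB_div _ _ _ _ _ _ w0 P1.
have [b1 b2 b3 b4 b5] := PB_div _ _ _ _ _ _ w0 P2.
have [c1 c2 c3 c4 c5] := PB_div _ _ _ _ _ _ w0 P3.
have [d1 d2 d3 d4 d5] := PB_div _ _ _ _ _ _ w0 P4.
move: a1 a2 a3 a4 a5 b1 b2 b3 b4 b5 c1 c2 c3 c4 c5 d1 d2 d3 d4 d5.
rewrite e0 e1 e2 e3 e4.
move: (I1 / w) (I2 / w) (I3 / w) (I4 / w) (gam * w) (Gam * w) => j1 j2 j3 j4 A B.
move=> a1 a2 a3 a4 a5 b1 b2 b3 b4 b5 c1 c2 c3 c4 c5 d1 d2 d3 d4 d5.
move: a5 b5 c5 d5 => /andP[a5 a6] /andP[b5 b6] /andP[c5 c6] /andP[d5 d6].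
split; rewrite ler_norml; apply/andP; split; lra.
Qed.

Lemma piece_PB (h : R -> R) (u w gam Gam : R) : 0 < w ->
  measurable_fun setT h -> (forall r, 0 <= h r <= 1) ->
  (forall x y, u <= x -> x <= y -> y <= u + w ->
     gam * (y - x) <= h x - h y <= Gam * (y - x)) ->
  exists I : R,
    (\int[mu]_(r in `[u, (u + w)%R]) (h r)%:E = I%:E)%E /\
    PB (h u) (h (u + w)) I w gam Gam.
Proof.
move=> w0 mh h01 hb.
have [I [e [l1 [u1 [l2 u2]]]]] := piece_all h u w gam Gam w0 mh h01 hb.
exists I; split => //; split => //.
have := hb u (u + w) (lexx u) _ (lexx _).
have -> : u + w - u = w by ring.
by apply; rewrite lerDl ltW.
Qed.
End S.

Theorem corollary4p1 (R : realType) (d : measure_display) (T : measurableType d)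
  (P : probability T R) (X : {RV P >-> R}) (f : R -> R) (a b gam Gam : R) :
  a < b ->
  (* X takes values in [a,b] *)
  (forall w, a <= X w <= b) ->
  (* f : [a,b] -> [0,1] *)
  (forall t, a <= t <= b -> 0 <= f t <= 1) ->
  (* f in L^1[a,b] *)
  (lebesgue_measure).-integrable `[a, b] (EFin \o f) ->
  (* f is the density: F(x) = Pr(X <= x) = int_a^x f(t) dt *)
  (forall x, a <= x <= b ->
     cdf X x = (\int[lebesgue_measure]_(t in `[a, x]) (f t)%:E)%E) ->
  (* F is differentiable in (a,b) with F' = f *)
  (forall t, a < t < b -> derivable (cdfR X) t 1 /\ derive1 (cdfR X) t = f t) ->
  (forall t, a <= t <= b -> gam <= f t <= Gam) ->
  `| (cdfR X ((3 * a + b) / 4) + cdfR X ((a + 3 * b) / 4)) / 2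
      - (b - fine 'E_P[X]) / (b - a) | <= (b - a) / 4 * (1 / (b - a) - gam)
  /\
  `| (cdfR X ((3 * a + b) / 4) + cdfR X ((a + 3 * b) / 4)) / 2
      - (b - fine 'E_P[X]) / (b - a) | <= (b - a) / 4 * (Gam - 1 / (b - a)).
Proof.
move=> ab Xab f01 intf Fint _ fbd.
set F := cdfR X.
have cdfE x : cdf X x = (F x)%:E by rewrite /F /cdfR fineK // fin_num_measure.
have F01 x : 0 <= F x <= 1.
  have := cdf_ge0 X x; have := cdf_le1 X x; rewrite cdfE !lee_fin => h1 h0.
  by rewrite h0 h1.
have Fmono x y : x <= y -> F x <= F y.
  by move=> xy; rewrite -lee_fin -!cdfE; exact: cdf_nondecreasing.
have Fb x : b <= x -> F x = 1.
  move=> bx; apply/EFin_inj; rewrite -cdfE /cdf /distribution /pushforward /=.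
  rewrite (_ : _ @^-1` _ = setT) ?probability_setT //.
  apply/seteqP; split => // w _ /=; rewrite in_itv /=.
  by have /andP[_ h] := Xab w; exact: le_trans h bx.
have Fa : F a = 0.
  apply/EFin_inj; rewrite -cdfE Fint; last by rewrite lexx ltW.
  by rewrite set_itv1 integral_set1.
have f0 t : a <= t <= b -> 0 <= f t by move=> /f01 /andP[].
have Fbd x y : a <= x -> x <= y -> y <= b ->
    gam * (y - x) <= F y - F x <= Gam * (y - x).
  move=> ax xy yb.
  have [E [lo up]] := int_bounds f a b gam Gam x y ax xy yb intf f0 fbd.
  set I := (\int[lebesgue_measure]_(t in `]x, y]) (f t)%:E)%E in E lo up.
  have I0 : (0 <= I)%E.
    apply: integral_ge0 => t; rewrite /= in_itv /= => /andP[h1 h2].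
    by rewrite lee_fin f0 //; apply/andP; split; lra.
  have Ifin : I \is a fin_num by rewrite ge0_fin_numE // (le_lt_trans up) // ltry.
  have hx : a <= x <= b by apply/andP; split => //; exact: le_trans xy yb.
  have hy : a <= y <= b by apply/andP; split => //; exact: le_trans ax xy.
  have eF : F y = F x + fine I.
    by apply/EFin_inj; rewrite EFinD (fineK Ifin) -!cdfE (Fint y hy) (Fint x hx) E.
  rewrite -(fineK Ifin) !lee_fin in lo up.
  by rewrite eF addrAC subrr add0r lo up.
have LX : (X : T -> R) \in Lfun P 1.
  apply/Lfun1_integrable; apply: measurable_bounded_integrable => //.
  - by apply: (le_lt_trans (probability_le1 _ measurableT)); exact: ltry.
  - exists (`|a| + `|b|); split=> // M hM w _ /=.
    have /andP[h1 h2] := Xab w.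
    rewrite (le_trans _ (ltW hM)) // ler_norml.
    have := ler_norm b; have := ler_norm (- a); rewrite normrN.
    have := normr_ge0 a; have := normr_ge0 b => n1 n2 n3 n4.
    by apply/andP; split; lra.
pose Y : {RV P >-> R} := (X : {mfun T >-> R}) - (cst a : {mfun T >-> R}).
have YE w : Y w = X w - a by [].
have EY : ('E_P[Y] = 'E_P[X] - a%:E)%E.
  have -> : ('E_P[Y] = 'E_P[X \- cst a])%E by [].
  by rewrite expectationB // ?expectation_cst //; exact: Lfun_cst.
have Y0 w : 0 <= Y w by rewrite YE subr_ge0; have /andP[] := Xab w.
pose h r := 1 - F (a + r).
have ccdfY r : ccdf Y r = (h r)%:E.
  rewrite ccdf_1_cdf; have -> : cdf Y r = cdf X (a + r).
    rewrite /cdf /distribution /pushforward /=; congr (P _).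
    apply/seteqP; split => w /=; rewrite !in_itv /=.
    + by change (X w - a <= r -> X w <= a + r) => hw; lra.
    + by change (X w <= a + r -> X w - a <= r) => hw; lra.
  by rewrite cdfE -EFinB.
have mh : measurable_fun setT h.
  apply: nonincreasing_measurable => // x y xy.
  by rewrite /h lerD2l lerN2; apply: Fmono; rewrite lerD2l.
have h01 r : 0 <= h r <= 1 by have := F01 (a + r); rewrite /h => /andP[? ?]; apply/andP; split; lra.
have h0 r : 0 <= h r by have /andP[] := h01 r.
set w := (b - a) / 4.
have w0 : 0 < w by rewrite /w divr_gt0 // subr_gt0.
pose p1 := 0 + w. pose p2 := p1 + w. pose p3 := p2 + w. pose p4 := p3 + w.
have ep4 : a + p4 = b by rewrite /p4 /p3 /p2 /p1 /w; field.
have EYint : ('E_P[Y] = \int[lebesgue_measure]_(r in `[0%R, +oo[) (h r)%:E)%E.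
  by rewrite ge0_expectation_ccdf //; apply: eq_integral => r _; exact: ccdfY.
have ep : [/\ p1 = w, p2 = 2 * w, p3 = 3 * w & p4 = 4 * w].
  by split; rewrite /p4 /p3 /p2 /p1; ring.
case: ep => ep1 ep2 ep3 ep4'.
have split0 : (\int[lebesgue_measure]_(r in `[0%R, +oo[) (h r)%:E =
    \int[lebesgue_measure]_(r in `[0%R, p4]) (h r)%:E)%E.
  have mE : measurable_fun setT (EFin \o h) by exact/measurable_EFinP.
  rewrite (@itv_bndbnd_setU _ _ _ (BRight p4)); last 2 first.
    by rewrite bnd_simp ep4'; lra.
    by [].
  rewrite ge0_integral_setU //.
  - rewrite [X in (_ + X)%E](_ : _ = 0%E) ?adde0 //.
    apply: integral0_eq => r; rewrite /= in_itv /= andbT => hr.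
    by rewrite /h Fb ?subrr //; rewrite -ep4 lerD2l ltW.
  - exact: measurable_funS mE.
  - by move=> r _; rewrite lee_fin.
  - rewrite disj_set2E; apply/eqP/seteqP; split => // z /= [].
    by rewrite !in_itv /= andbT => /andP[_ h1] h2; lra.
have hbg u : 0 <= u -> u + w <= p4 -> forall x y, u <= x -> x <= y -> y <= u + w ->
    gam * (y - x) <= h x - h y <= Gam * (y - x).
  move=> u0 uw x y ux xy yw.
  have -> : h x - h y = F (a + y) - F (a + x) by rewrite /h; ring.
  have -> : y - x = (a + y) - (a + x) by ring.
  apply: Fbd; lra.
have [I1 [eI1 PB1]] := piece_PB h 0 w gam Gam w0 mh h01 (hbg 0 (lexx 0) ltac:(lra)).
have [I2 [eI2 PB2]] := piece_PB h p1 w gam Gam w0 mh h01 (hbg p1 ltac:(lra) ltac:(lra)).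
have [I3 [eI3 PB3]] := piece_PB h p2 w gam Gam w0 mh h01 (hbg p2 ltac:(lra) ltac:(lra)).
have [I4 [eI4 PB4]] := piece_PB h p3 w gam Gam w0 mh h01 (hbg p3 ltac:(lra) ltac:(lra)).
rewrite -/p1 in eI1 PB1; rewrite -/p2 in eI2 PB2; rewrite -/p3 in eI3 PB3;
  rewrite -/p4 in eI4 PB4.
have eYS : ('E_P[Y] = (I1 + I2 + I3 + I4)%:E)%E.
  rewrite EYint split0.
  rewrite (int_split h 0 p1 p4 ltac:(lra) ltac:(lra) mh h0).
  rewrite (int_split h p1 p2 p4 ltac:(lra) ltac:(lra) mh h0).
  rewrite (int_split h p2 p3 p4 ltac:(lra) ltac:(lra) mh h0).
  by rewrite eI1 eI2 eI3 eI4 !EFinD !addeA.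
have fE := expectation_fin_num LX.
have eS : fine 'E_P[X] - a = I1 + I2 + I3 + I4.
  by apply/EFin_inj; rewrite EFinB fineK // -EY eYS.
apply: (final a b gam Gam (fine 'E_P[X]) (F ((3 * a + b) / 4)) (F (a + p2))
  (F ((a + 3 * b) / 4)) (h 0) (h p1) (h p2) (h p3) (h p4) I1 I2 I3 I4 w
  _ _ eS _ _ _ _ _ PB1 PB2 PB3 PB4).
- exact: w0.
- by rewrite /w; field.
- by rewrite /h addr0 Fa subr0.
- by rewrite /h ep4 Fb ?subrr.
- by rewrite /h; congr (1 - F _); rewrite ep1 /w; field.
- by [].
- by rewrite /h; congr (1 - F _); rewrite ep3 /w; field.
Qed.
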